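(* Let $\ell\ge1$ be an integer and $p\in(0,1)$. Consider the random walk $(X_t)_{t\ge0}$ on $\mathbb{Z}_2^\ell$ with $X_0$ uniformly distributed on $\mathbb{Z}_2^\ell$, and let $T=\min\{t\ge 0: X_t=\mathbf{1}^\ell\}$, where $\mathbf{1}^\ell$ is the all-ones string. Then \[ \mathbb{E}[T]=\sum_{j=1}^{\ell}\binom{\ell}{j}\frac{1}{1-(1-2p)^j}. \]
   Context: $\mathbb{Z}_2^\ell$ is the group of bit strings of length $\ell$ with coordinatewise addition modulo 2. The random walk is defined by $X_{t+1}=X_t+W_{t+1}$, where $W_1,W_2,\dots$ are i.i.d., independent of $X_0$, and each $W_t$ has law $\mu(w)=p^{\|w\|}(1-p)^{\ell-\|w\|}$ with $\|w\|$ the number of ones in $w$; equivalently, at each step every bit of the current string is flipped independently with probability $p$. *)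

(* Defs.v *)
From HB Require Import structures.
From mathcomp Require Import all_boot all_order all_algebra.
From mathcomp Require Import all_classical all_reals all_analysis.
Set Implicit Arguments. Unset Strict Implicit. Unset Printing Implicit Defensive.
Import Order.TTheory GRing.Theory Num.Theory.
Local Open Scope ring_scope.

Definition bits (l : nat) := {ffun 'I_l -> bool}.

Definition badd (l : nat) (x y : bits l) : bits l := [ffun i => x i (+) y i].

Definition ones (l : nat) : bits l := [ffun => true].

Definition hweight (l : nat) (w : bits l) : nat := #|[set i | w i]|.

Definition mu (R : comNzRingType) (l : nat) (p : R) (w : bits l) : R :=
  p ^+ hweight w * (1 - p) ^+ (l - hweight w).

Definition walkpos (l t : nat) (x0 : bits l) (ws : t.-tuple (bits l)) (k : nat)
  : bits l := foldl (@badd l) x0 (take k ws).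

(* P(T > t) = P(X_0 <> 1^l, ..., X_t <> 1^l), with X_0 uniform on Z_2^l and
   W_1, ..., W_t i.i.d. with law mu, independent of X_0 (the joint law of
   (X_0, W_1, ..., W_t) is the product measure). *)
Definition prob_T_gt (R : fieldType) (l : nat) (p : R) (t : nat) : R :=
  \sum_(x0 : bits l) \sum_(ws : t.-tuple (bits l))
    ((2 ^+ l)^-1 * \prod_(w <- ws) mu p w) *
      (if [forall k : 'I_t.+1, walkpos x0 ws k != ones l] then 1 else 0).

(* Main.v *)
Require Import Defs.
From HB Require Import structures.
From mathcomp Require Import all_boot all_order all_algebra.
From mathcomp Require Import all_classical all_reals all_analysis.
From mathcomp Require Import ring lra.
Import Order.TTheory GRing.Theory Num.Theory.
Local Open Scope classical_set_scope.
Local Open Scope ring_scope.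
Set Implicit Arguments. Unset Strict Implicit.

Section Alg.
Variable R : realType.
Variable l : nat.

Definition bzero : bits l := [ffun => false].
Definition chi (S y : bits l) : R := \prod_i (if S i && y i then -1 else 1).

Lemma chiC S y : chi S y = chi y S.
Proof. by apply: eq_bigr => i _; rewrite andbC. Qed.

Lemma nz_ex (S : bits l) : S != bzero -> exists i, S i.
Proof.
case: (pickP (fun i => S i)) => [i Si|H]; first by exists i.
by move/eqP => []; apply/ffunP => i; rewrite ffunE H.
Qed.

Lemma sum_ffun (F : 'I_l -> bool -> R) :
  \sum_(y : bits l) \prod_i F i (y i) = \prod_i (F i true + F i false).
Proof.
rewrite (eq_bigr (fun i => \sum_b F i b)); last by move=> i _; rewrite big_bool.
by rewrite bigA_distr_bigA.
Qed.

Lemma chi_sum S : \sum_y chi S y = if S == bzero then 2 ^+ l else 0.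
Proof.
rewrite /chi (sum_ffun (fun i b => if S i && b then -1 else 1)); case: eqP => [->|/eqP/nz_ex [i Si]].
  rewrite (eq_bigr (fun _ => 2)) ?prodr_const ?card_ord //.
  by move=> i _; rewrite ffunE.
by rewrite (bigD1 i) //= Si /= addNr mul0r.
Qed.

Lemma chi_sum' y : \sum_S chi S y = if y == bzero then 2 ^+ l else 0.
Proof. by rewrite -chi_sum; apply: eq_bigr => S _; rewrite chiC. Qed.

Lemma chiD S a b : chi S (badd a b) = chi S a * chi S b.
Proof.
rewrite /chi -big_split; apply: eq_bigr => i _ /=; rewrite ffunE.
by case: (S i) (a i) (b i) => [] [] [] /=; rewrite ?mulrNN ?mulr1 ?mul1r.
Qed.

Lemma chi0 S : chi S bzero = 1.
Proof. by rewrite /chi big1 // => i _; rewrite ffunE andbF. Qed.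

Lemma baddK (x : bits l) : involutive (badd x).
Proof. by move=> y; apply/ffunP => i; rewrite !ffunE addbA addbb. Qed.
Lemma badd_inj (x : bits l) : injective (badd x).
Proof. exact: inv_inj (baddK x). Qed.
Lemma baddC (x y : bits l) : badd x y = badd y x.
Proof. by apply/ffunP => i; rewrite !ffunE addbC. Qed.
Lemma baddxx (x : bits l) : badd x x = bzero.
Proof. by apply/ffunP => i; rewrite !ffunE addbb. Qed.

Lemma hweight0 (S : bits l) : hweight S = 0%N -> S = bzero.
Proof.
move=> H0; apply/ffunP => i; rewrite ffunE; apply/negbTE/negP => Si.
have : (0 < hweight S)%N by rewrite /hweight card_gt0; apply/set0Pn; exists i; rewrite inE.
by rewrite H0.
Qed.

Lemma hweight_bzero : hweight bzero = 0%N.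
Proof. by apply/eqP; rewrite /hweight cards_eq0; apply/eqP/setP => i; rewrite !inE ffunE. Qed.

Lemma hweight_le (S : bits l) : (hweight S <= l)%N.
Proof. by rewrite /hweight -[X in (_ <= X)%N]card_ord max_card. Qed.

Variable p : R.

Lemma mu_prod (w : bits l) : mu p w = \prod_i (if w i then p else 1 - p).
Proof.
rewrite (bigID (fun i => w i)) /=.
rewrite [X in X * _](eq_bigr (fun _ => p)); last by move=> i ->.
rewrite [X in _ * X](eq_bigr (fun _ => 1 - p)); last by move=> i Hi; rewrite (negbTE Hi).
rewrite !prodr_const /mu /hweight cardsE; congr (_ * _ ^+ _).
by rewrite -{1}(card_ord l) -(cardC w) addKn; apply: eq_card.
Qed.

Definition lam := 1 - 2 * p.

Lemma mu_chi (S : bits l) : \sum_(w : bits l) mu p w * chi S w = lam ^+ hweight S.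
Proof.
rewrite (eq_bigr (fun w : bits l => \prod_i ((if w i then p else 1 - p) * (if S i && w i then -1 else 1)))); last first.
  by move=> w _; rewrite mu_prod /chi -big_split.
rewrite (sum_ffun (fun i b => (if b then p else 1 - p) * (if S i && b then -1 else 1))) /hweight -prodr_const (big_mkcond (fun i => i \in _)) /=.
apply: eq_bigr => i _; rewrite inE; case: (S i) => /=; rewrite /lam.
  rewrite mulrN1 mulr1; lra.
rewrite !mulr1; lra.
Qed.

Lemma mu_sum : \sum_(w : bits l) mu p w = 1.
Proof.
have := mu_chi bzero; rewrite hweight_bzero expr0 => <-.
by apply: eq_bigr => w _; rewrite chiC chi0 mulr1.
Qed.

End Alg.

Section Harm.
Variable R : realType.
Variable l : nat.
Variable p : R.
Hypothesis hp0 : 0 < p.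
Hypothesis hp1 : p < 1.

Lemma lam_lt1 : `|lam p| < 1.
Proof. move: hp0 hp1 => h0 h1; rewrite ltr_norml /lam; apply/andP; split; lra. Qed.

Lemma lamX_neq1 j : (0 < j)%N -> lam p ^+ j != 1.
Proof.
move=> j0; apply/eqP => H.
have : `|lam p ^+ j| < 1 by rewrite normrX exprn_ilt1 ?normr_ge0 ?lam_lt1 // -lt0n.
by rewrite H normr1 ltxx.
Qed.

Definition hh (x : bits l) : R :=
  \sum_S (1 - chi R S (badd x (ones l))) / (1 - lam p ^+ hweight S).

Lemma hh_ones : hh (ones l) = 0.
Proof.
rewrite /hh big1 // => S _.
by rewrite baddxx chi0 subrr mul0r.
Qed.

Lemma badd_swap (x w : bits l) :
  badd (badd x w) (ones l) = badd (badd x (ones l)) w.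
Proof. by apply/ffunP => i; rewrite !ffunE -!addbA [w i (+) _]addbC. Qed.

Lemma hh_harm x : x != ones l ->
  hh x = 1 + \sum_(w : bits l) mu p w * hh (badd x w).
Proof.
move=> xn1; set y := badd x (ones l).
have yn0 : y != bzero l.
  apply: contra xn1 => /eqP Hy; apply/eqP.
  have -> : x = badd y (ones l) by rewrite /y baddC [badd x _]baddC baddK.
  by rewrite Hy; apply/ffunP => i; rewrite !ffunE.
have -> : \sum_(w : bits l) mu p w * hh (badd x w) =
    \sum_S (1 - chi R S y * lam p ^+ hweight S) / (1 - lam p ^+ hweight S).
  rewrite /hh.
  under eq_bigr => w _ do rewrite mulr_sumr.
  rewrite exchange_big /=; apply: eq_bigr => S _.
  transitivity (\sum_(w : bits l) (mu p w - chi R S y * (mu p w * chi R S w)) / (1 - lam p ^+ hweight S)).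
    by apply: eq_bigr => w _; rewrite badd_swap chiD -/y; ring.
  by rewrite -mulr_suml sumrB -mulr_sumr mu_sum mu_chi.
apply/eqP; rewrite -subr_eq -sumrB.
rewrite (eq_bigr (fun S => (if S == bzero l then 1 else 0) - chi R S y)); last first.
  move=> S _; case: eqP => [->|/eqP Sn0].
    by rewrite hweight_bzero expr0 chiC chi0 subrr !invr0 !mulr0 subrr.
  have d0 : 1 - lam p ^+ hweight S != 0.
    rewrite subr_eq0 eq_sym lamX_neq1 // lt0n; apply: contra Sn0 => /eqP /hweight0 ->.
    by [].
  by apply/eqP; rewrite -subr_eq0; apply/eqP; field.
rewrite sumrB chi_sum' (negbTE yn0) subr0 -big_mkcond /=.
by rewrite big_pred1_eq.
Qed.

End Harm.

Section Walk.
Variable R : realType.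
Variable l : nat.
Variable p : R.

Definition FF t (x : bits l) : R :=
  \sum_(ws : t.-tuple (bits l)) (\prod_(w <- ws) mu p w) *
      (if [forall k : 'I_t.+1, walkpos x ws k != ones l] then 1 else 0).

Lemma prob_FF t : prob_T_gt l p t = (2 ^+ l)^-1 * \sum_x FF t x.
Proof.
rewrite /prob_T_gt mulr_sumr; apply: eq_bigr => x _.
by rewrite /FF mulr_sumr; apply: eq_bigr => ws _; rewrite mulrA.
Qed.

Lemma forall_ordS n (P : nat -> bool) :
  [forall k : 'I_n.+1, P k] = P 0%N && [forall k : 'I_n, P k.+1].
Proof.
apply/forallP/andP => [H|[H0 /forallP H] k].
  split; first exact: (H ord0).
  by apply/forallP => k; exact: (H (lift ord0 k)).
case: k => [[|k] Hk] //=.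
by have := H (Ordinal (Hk : (k < n)%N)).
Qed.

Lemma FF0 x : FF 0 x = if x == ones l then 0 else 1.
Proof.
rewrite /FF (big_pred1 [tuple]) => [|ws]; last by symmetry; apply/eqP; exact: tuple0.
rewrite big_nil mul1r (forall_ordS 0 (fun k => walkpos x [tuple] k != ones l)) /=.
have -> : [forall k : 'I_0, walkpos x [tuple] k.+1 != ones l] by apply/forallP => -[].
by rewrite andbT /walkpos /=; case: eqP.
Qed.

Lemma FFS t x : FF t.+1 x =
  if x == ones l then 0 else \sum_(w : bits l) mu p w * FF t (badd x w).
Proof.
rewrite /FF.
rewrite (reindex (fun pr : bits l * t.-tuple (bits l) => [tuple of pr.1 :: pr.2])) /=; last first.
  exists (fun ws : t.+1.-tuple (bits l) => (thead ws, [tuple of behead ws])).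
    by move=> [w ws] _ /=; rewrite theadE; congr (_, _); apply: val_inj.
  by move=> ws _; case/tupleP: ws => w ws /=; apply: val_inj.
rewrite -(pair_bigA _ (fun w (ws : t.-tuple (bits l)) =>
   (\prod_(w0 <- [tuple of w :: ws]) mu p w0) *
   (if [forall k : 'I_t.+2, walkpos x [tuple of w :: ws] k != ones l] then 1 else 0))) /=.
have E w (ws : t.-tuple (bits l)) :
  [forall k : 'I_t.+2, walkpos x [tuple of w :: ws] k != ones l] =
  (x != ones l) && [forall k : 'I_t.+1, walkpos (badd x w) ws k != ones l].
  by rewrite (forall_ordS t.+1 (fun k => walkpos x [tuple of w :: ws] k != ones l)).
case: eqP => [x1|/eqP xn1].
  rewrite big1 // => w _; rewrite big1 // => ws _.
  by rewrite E x1 eqxx /= mulr0.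
apply: eq_bigr => w _; rewrite mulr_sumr; apply: eq_bigr => ws _.
by rewrite E xn1 /= big_cons mulrA.
Qed.

End Walk.

Section Main.
Variable R : realType.
Variable l : nat.
Variable p : R.
Hypothesis hp0 : 0 < p.
Hypothesis hp1 : p < 1.

Definition GG t (x : bits l) : R := \sum_(0 <= s < t) FF p s x.
Definition rr t (x : bits l) : R := hh p x - GG t x.

Lemma rr_rec t x : rr t.+1 x =
  if x == ones l then 0 else \sum_(w : bits l) mu p w * rr t (badd x w).
Proof.
rewrite /rr /GG big_nat_recl // FF0.
case: eqP => [->|/eqP xn1].
  rewrite hh_ones big1 ?addr0 ?subrr // => s _.
  by rewrite FFS eqxx.
under eq_bigr => s _ do rewrite FFS (negbTE xn1).
rewrite exchange_big /= (hh_harm hp0 hp1 xn1) opprD addrACA subrr add0r.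
rewrite -sumrB; apply: eq_bigr => w _.
by rewrite mulrBr -mulr_sumr.
Qed.

Lemma rr_ones t : rr t (ones l) = 0.
Proof.
case: t => [|t]; last by rewrite rr_rec eqxx.
by rewrite /rr /GG big_geq // hh_ones subrr.
Qed.

Definition mm := Num.min p (1 - p).
Definition cc := mm ^+ l.

Lemma mm_gt0 : 0 < mm.
Proof. move: hp0 hp1 => h0 h1; rewrite /mm lt_min; apply/andP; split; lra. Qed.
Lemma mm_le1 : mm <= 1.
Proof. move: hp0 hp1 => h0 h1; rewrite /mm ge_min; apply/orP; left; lra. Qed.

Lemma cc_gt0 : 0 < cc.
Proof. by rewrite /cc exprn_gt0 // mm_gt0. Qed.
Lemma cc_le1 : cc <= 1.
Proof. by rewrite /cc exprn_ile1 ?mm_le1 // ltW // mm_gt0. Qed.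

Lemma mm_le (x : R) : x \in [:: p; 1 - p] -> mm <= x.
Proof. by rewrite !inE => /orP [] /eqP ->; rewrite /mm ge_min lexx ?orbT. Qed.

Lemma mu_ge (w : bits l) : cc <= mu p w.
Proof.
move: hp0 hp1 => h0 h1.
have -> : cc = mm ^+ hweight w * mm ^+ (l - hweight w) by rewrite -exprD subnKC // hweight_le.
have m0 := ltW mm_gt0.
apply: ler_pM; rewrite ?exprn_ge0 //.
  by apply: lerXn2r; rewrite ?nnegrE ?mm_le ?inE ?eqxx //; lra.
by apply: lerXn2r; rewrite ?nnegrE ?mm_le ?inE ?eqxx ?orbT //; lra.
Qed.

Lemma mu_ge0 (w : bits l) : 0 <= mu p w.
Proof. exact: le_trans (ltW cc_gt0) (mu_ge w). Qed.

Definition BB : R := \sum_(y : bits l) `|hh p y|.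
Definition qq : R := 1 - cc.

Lemma BB_ge0 : 0 <= BB.
Proof. by apply: sumr_ge0 => y _; exact: normr_ge0. Qed.
Lemma qq_ge0 : 0 <= qq.
Proof. by rewrite /qq subr_ge0 cc_le1. Qed.

Lemma rr_bound t (y : bits l) : `|rr t y| <= BB * qq ^+ t.
Proof.
elim: t y => [|t IH] y.
  rewrite /rr /GG big_geq // subr0 expr0 mulr1 /BB (bigD1 y) //= lerDl.
  by apply: sumr_ge0 => z _; exact: normr_ge0.
have Bq0 : 0 <= BB * qq ^+ t by rewrite mulr_ge0 ?exprn_ge0 ?BB_ge0 ?qq_ge0.
rewrite rr_rec; case: eqP => [_|/eqP xn1].
  by rewrite normr0 exprS mulrCA mulr_ge0 ?qq_ge0.
set w0 := badd y (ones l).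
apply: le_trans (ler_norm_sum _ _ _) _.
rewrite (bigD1 w0) //= /w0 baddK rr_ones mulr0 normr0 add0r.
apply: (@le_trans _ _ (\sum_(w | w != w0) mu p w * (BB * qq ^+ t))).
  apply: ler_sum => w _; rewrite normrM ger0_norm ?mu_ge0 //.
  by apply: ler_wpM2l; rewrite ?mu_ge0 ?IH.
rewrite -mulr_suml.
have -> : \sum_(w | w != w0) mu p w = 1 - mu p w0.
  have H := mu_sum l p; rewrite (bigD1 w0) //= in H.
  by rewrite -H addrC addrK.
rewrite exprS [X in _ <= X]mulrCA; apply: ler_wpM2r => //.
by move: (mu_ge w0); rewrite /qq => Hm; lra.
Qed.

End Main.

Section Final.
Variable R : realType.
Variable l : nat.
Variable p : R.
Hypothesis hp0 : 0 < p.
Hypothesis hp1 : p < 1.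

Lemma partial_eq n : \sum_(0 <= t < n) prob_T_gt l p t =
  (2 ^+ l)^-1 * \sum_(x : bits l) hh p x - (2 ^+ l)^-1 * \sum_(x : bits l) rr p n x.
Proof.
under eq_bigr do rewrite prob_FF.
rewrite -mulr_sumr -mulrBr; congr (_ * _).
rewrite exchange_big /= -sumrB; apply: eq_bigr => x _.
by rewrite /rr opprB addrC subrK.
Qed.

Lemma card_bits_sum (F : nat -> R) :
  \sum_(S : bits l) F (hweight S) = \sum_(j < l.+1) 'C(l, j)%:R * F j.
Proof.
rewrite (reindex (fun A : {set 'I_l} => [ffun i => i \in A] : bits l)) /=; last first.
  exists (fun S : bits l => [set i | S i]%SET).
    by move=> A _; apply/finset.setP => i; rewrite !inE ffunE.
  by move=> S _; apply/ffunP => i; rewrite ffunE inE.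
have HW (A : {set 'I_l}) : hweight ([ffun i => i \in A] : bits l) = #|A|.
  by rewrite /hweight; apply: eq_card => i; rewrite !inE ffunE.
under eq_bigr do rewrite HW.
rewrite (partition_big (fun A : {set 'I_l} => inord #|A| : 'I_l.+1) xpredT) //=.
apply: eq_bigr => j _.
rewrite (eq_bigl (fun A : {set 'I_l} => #|A| == j)); last first.
  move=> A /=; have HA : (#|A| < l.+1)%N by rewrite ltnS -[X in (_ <= X)%N](card_ord l) max_card.
  apply/eqP/eqP => [<-|H]; first by rewrite inordK.
  by apply/val_inj; rewrite /= inordK.
rewrite (eq_bigr (fun _ => F j)); last by move=> A /eqP ->.
rewrite sumr_const -cardsE card_draws card_ord.
by rewrite mulr_natl.
Qed.

Lemma L_eq : (2 ^+ l)^-1 * \sum_(x : bits l) hh p x =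
  \sum_(1 <= j < l.+1) ('C(l, j)%:R / (1 - (1 - 2 * p) ^+ j)).
Proof.
have N0 : (2 ^+ l : R) != 0 by rewrite expf_neq0 // pnatr_eq0.
rewrite /hh exchange_big /= mulr_sumr.
rewrite (eq_bigr (fun S : bits l => (1 - lam p ^+ hweight S)^-1)); last first.
  move=> S _; rewrite -mulr_suml sumrB.
  have -> : \sum_(x : bits l) chi R S (badd x (ones l)) = \sum_x chi R S x.
    rewrite [RHS](reindex_inj (h := fun x : bits l => badd x (ones l))) //= => a b.
    by rewrite !(baddC _ (ones l)); apply: badd_inj.
  have -> : \sum_(x : bits l) (1 : R) = 2 ^+ l.
    have := chi_sum R (bzero l); rewrite eqxx => <-.
    by apply: eq_bigr => x _; rewrite chiC chi0.
  rewrite chi_sum; case: eqP => [->|_].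
    by rewrite hweight_bzero expr0 !subrr invr0 mul0r mulr0.
  by rewrite subr0 mulrA mulVf ?mul1r.
rewrite (card_bits_sum (fun j => (1 - lam p ^+ j)^-1)).
rewrite -(big_mkord xpredT (fun j => 'C(l, j)%:R * (1 - lam p ^+ j)^-1)).
by rewrite big_ltn // bin0 /lam expr0 subrr invr0 mulr0 add0r.
Qed.

End Final.

Unset Implicit Arguments.

Theorem mainTheorem2 (R : realType) (l : nat) (p : R) :
  (1 <= l)%N -> 0 < p < 1 ->
  (fun n : nat => (\sum_(0 <= t < n) prob_T_gt l p t)%R) @ \oo -->
    \sum_(1 <= j < l.+1) ('C(l, j)%:R / (1 - (1 - 2 * p) ^+ j)).
Proof.
move=> _ /andP [hp0 hp1].
have HL := L_eq l p.
set L := \sum_(1 <= j < l.+1) _ in HL *.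
set C : R := (2 ^+ l)^-1 * \sum_(x : bits l) BB l p.
set q := qq l p.
have C0 : 0 <= C.
  by rewrite mulr_ge0 ?invr_ge0 ?exprn_ge0 // sumr_ge0 // => x _; exact: BB_ge0 l p.
have Hb n : `|(2 ^+ l)^-1 * \sum_(x : bits l) rr p n x| <= C * q ^+ n.
  rewrite normrM ger0_norm ?invr_ge0 ?exprn_ge0 // /C -mulrA.
  apply: ler_wpM2l; first by rewrite invr_ge0 exprn_ge0.
  rewrite mulr_suml; apply: le_trans (ler_norm_sum _ _ _) _.
  apply: ler_sum => x _; exact: (rr_bound hp0 hp1 n x).
have Hq : (C * q ^+ n : R) @[n --> \oo] --> 0.
  have Hq1 : `|q| < 1.
    rewrite ger0_norm ?(qq_ge0 l hp0 hp1) // /q /qq; move: (cc_gt0 l hp0 hp1) => hc; lra.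
  have := cvgMl_tmp (a := C) (cvg_expr Hq1); rewrite mulr0; exact.
apply: (@squeeze_cvgr _ _ _ _ (fun n => L - C * q ^+ n) (fun n => L + C * q ^+ n)).
- apply: nearW => n; rewrite partial_eq HL.
  move: (Hb n); set X := (_ * \sum_(x : bits l) rr p n x).
  rewrite ler_norml => /andP [h1 h2]; apply/andP; split; lra.
- have := cvgB (cvg_cst L) Hq; rewrite subr0; exact.
- have := cvgD (cvg_cst L) Hq; rewrite addr0; exact.
Qed.
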